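(* Let $H$ be a graph with $1\le\delta(H)\le|V(H)|-2$ and let $\{\mathcal H_i\}_{i=1}^s$ be a $d$-sequence of $H$ such that $Z=\min\{z_i(H): 2\le i\le s\}\le 0$. Let $T$ be a graph with $1\le\delta(T)\le|V(T)|-2$ having a $d$-sequence $\{\mathcal T_i\}_{i=1}^t$ with $z_i(T)\ge0$ for all $2\le i\le t$. Let $G=H+T$. If $z_t(T)\ge d_H-Z$, then $|V(G)|+\delta(G)\le str(G)\le |V(G)|+d_T$.
   Context: For a graph $G$ of order $p$, a numbering of $G$ is a bijection $f:V(G)\to[1,p]$. The strength of a numbering $f$ is $str_f(G)=\max\{f(u)+f(v): uv\in E(G)\}$, and $str(G)=\min\{str_f(G): f \text{ a numbering of } G\}$. $\delta(G)$ is the minimum degree; $G+H$ denotes disjoint union; $mK_1$ is the edgeless graph on $m$ vertices; $K_r$ the complete graph. $d$-sequence: Let $G$ have order $p$ with $1\le\delta(G)\le p-2$. Set $\mathcal G_1=G_1=G$, $m_1=0$. For each $i$, write $\mathcal G_i=m_iK_1+G_i$, where $m_i\ge0$ is the number of isolated vertices of $\mathcal G_i$ and $G_i$ has no isolated vertices. If $\mathcal G_i$ is neither of the form $mK_1$ ($m\ge1$) nor $mK_1+K_r$ ($m\ge0$, $r\ge2$), choose any vertex $u_i$ of $G_i$, put $d_i=\deg_{G_i}(u_i)$, and let $\mathcal G_{i+1}$ be obtained from $G_i$ by deleting $u_i$ together with all its neighbours in $G_i$. Stop at the first index $s$ ($s\ge 2$) for which $\mathcal G_s$ is $m_sK_1$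 with $m_s\ge1$ (then set $d_s=0$) or $m_sK_1+K_r$ with $m_s\ge0$, $r\ge2$ (then $d_s=r-1$). The sequence $\{\mathcal G_i\}_{i=1}^s$ is a $d$-sequence of $G$. Write $d_G=d_1$, $y_j(G)=m_j+1-d_j$ and $z_i(G)=\sum_{j=2}^i y_j(G)$ for $2\le i\le s$. *)

(* Defs.v *)
(* Finite simple graphs as symmetric irreflexive relations
   on a finType. *)
From mathcomp Require Import all_boot all_order all_algebra.
Set Implicit Arguments. Unset Strict Implicit. Unset Printing Implicit Defensive.
Import Order.TTheory GRing.Theory Num.Theory.

Section Graphs.
Variable V : finType.
Variable e : rel V.

Definition deg (v : V) : nat := #|[set w | e v w]|.
Definition mindeg : nat := \big[minn/#|V|]_(v : V) deg v.

(* Numberings: bijections V -> [1,p], encoded as injective f : V -> 'I_p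
   with the label of v being (f v).+1. *)
Definition strf (f : {ffun V -> 'I_#|V|}) : nat :=
  \max_(u : V) \max_(v : V | e u v) ((f u).+1 + (f v).+1).
Definition str : nat :=
  \big[minn/(#|V| + #|V|)]_(f : {ffun V -> 'I_#|V|} | injectiveb f) strf f.

(* Induced subgraphs are given by their vertex set A. *)
Definition nbr (A : {set V}) (v : V) : {set V} := [set w in A | e v w].
(* vertices of A that are not isolated in G[A] (vertex set of G_i) *)
Definition core (A : {set V}) : {set V} := [set v in A | nbr A v != set0].
Definition mcount (A : {set V}) : nat := #|A :\: core A|.
Definition is_clique (A : {set V}) : bool :=
  [forall v in A, forall w in A, (v != w) ==> e v w].
(* G[A] is of the form m K_1 (m >= 1) or m K_1 + K_r (m >= 0, r >= 2) *)
Definition terminal (A : {set V}) : bool :=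
  ((core A == set0) && (A != set0)) || ((core A != set0) && is_clique (core A)).

(* A d-sequence {calG_i}_{i=1}^s with chosen vertices u_i (1 <= i < s);
   S i is the vertex set of calG_i. *)
Definition is_dseq (s : nat) (S : nat -> {set V}) (u : nat -> V) : Prop :=
  [/\ 2 <= s, S 1 = setT,
      (forall i, 1 <= i < s ->
         [/\ ~~ terminal (S i), u i \in core (S i) &
             S i.+1 = core (S i) :\: (u i |: nbr (core (S i)) (u i))])
    & terminal (S s)].

Definition dval (s : nat) (S : nat -> {set V}) (u : nat -> V) (i : nat) : nat :=
  if i < s then #|nbr (core (S i)) (u i)|
  else if core (S i) == set0 then 0 else (#|core (S i)|).-1.

Definition mval (S : nat -> {set V}) (i : nat) : nat := mcount (S i).

Local Open Scope ring_scope.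
Definition yval s S u (j : nat) : int :=
  (mval S j)%:Z + 1 - (dval s S u j)%:Z.
Definition zval s S u (i : nat) : int := \sum_(2 <= j < i.+1) yval s S u j.
Definition zmin s S u : int :=
  \big[Num.min/zval s S u 2]_(2 <= i < s.+1) zval s S u i.
End Graphs.

Definition sumrel (V1 V2 : finType) (e1 : rel V1) (e2 : rel V2) : rel (V1 + V2) :=
  fun x y => match x, y with
             | inl a, inl b => e1 a b
             | inr a, inr b => e2 a b
             | _, _ => false
             end.

(* Main.v *)
Require Import Defs.
From mathcomp Require Import all_boot all_order all_algebra zify.
Import Order.TTheory GRing.Theory Num.Theory.
Set Implicit Arguments. Unset Strict Implicit. Unset Printing Implicit Defensive.

Section Numbering.
Variable V : finType.
Variable w : V -> nat.

Definition kk (x : V) : nat := w x * #|V| + enum_rank x.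

Lemma kk_w x z : kk z <= kk x -> w z <= w x.
Proof.
rewrite /kk => H. have h1 := ltn_ord (enum_rank x). have h2 := ltn_ord (enum_rank z).
set a := nat_of_ord (enum_rank x) in h1 H. set b := nat_of_ord (enum_rank z) in h2 H.
clearbody a b. move: #|V| h1 h2 H => n h1 h2 H.
case: (leqP (w z) (w x)) => // hlt. exfalso.
have : (w x).+1 * n <= w z * n by rewrite leq_mul2r hlt orbT.
nia.
Qed.

Lemma kk_inj : injective kk.
Proof.
move=> x y H. have h1 := kk_w (eq_leq H). have h2 := kk_w (eq_leq (esym H)).
have ew : w x = w y by apply/eqP; rewrite eqn_leq h1 h2.
move: H; rewrite /kk ew => /addnI /val_inj /enum_rank_inj //.
Qed.

Definition fk (x : V) : nat := #|[set z | kk z < kk x]|.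

Lemma fk_lt x : fk x < #|[set z | w z <= w x]|.
Proof.
rewrite /fk; apply: (@leq_trans #|[set z | kk z <= kk x]|).
  apply: proper_card; apply/properP; split.
    by apply/subsetP => z; rewrite !inE => /ltnW.
  by exists x; rewrite !inE ?ltnn.
by apply: subset_leq_card; apply/subsetP => z; rewrite !inE => /kk_w.
Qed.

Lemma fk_ltV x : fk x < #|V|.
Proof. apply: leq_trans (fk_lt x) _; exact: max_card. Qed.

Lemma fk_mono x y : kk x < kk y -> fk x < fk y.
Proof.
move=> H; apply: proper_card; apply/properP; split.
  by apply/subsetP => z; rewrite !inE => /leq_trans; apply; apply: ltnW.
by exists x; rewrite !inE ?ltnn.
Qed.

Definition ff : {ffun V -> 'I_#|V|} := [ffun x => Ordinal (fk_ltV x)].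

Lemma ff_inj : injectiveb ff.
Proof.
apply/injectiveP => x y; rewrite !ffunE => /(congr1 val) /= H.
case: (ltngtP (kk x) (kk y)) => [/fk_mono|/fk_mono|/kk_inj //]; rewrite H ltnn //.
Qed.

Lemma ff_le x : (ff x).+1 <= #|[set z | w z <= w x]|.
Proof. rewrite ffunE; exact: fk_lt. Qed.

End Numbering.

Lemma card_small_ord n k (A : {set 'I_n}) : (forall i, i \in A -> i < k) -> #|A| <= k.
Proof.
case: n A => [|n] A H.
  by rewrite (leq_trans (max_card _)) // card_ord.
apply: (@leq_trans #|[set inord j | j : 'I_k]|).
  apply: subset_leq_card; apply/subsetP => i iA; apply/imsetP.
  by exists (Ordinal (H i iA)) => //; rewrite inord_val.
by rewrite (leq_trans (leq_imset_card _ _)) // card_ord.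
Qed.

Section Lower.
Variable V : finType.
Variable e : rel V.

Lemma mindeg_le x : mindeg e <= deg e x.
Proof.
rewrite /mindeg; have : x \in index_enum V by rewrite mem_index_enum.
elim: (index_enum V) => // a r IH; rewrite big_cons inE => /orP [/eqP <-|/IH h].
  by rewrite geq_minl.
by rewrite geq_min h orbT.
Qed.

Lemma mindeg_leV : mindeg e <= #|V|.
Proof.
rewrite /mindeg; elim/big_ind: _ => //.
  by move=> a b ha hb; rewrite geq_min ha.
by move=> a _; rewrite /deg max_card.
Qed.

Lemma strf_lb (f : {ffun V -> 'I_#|V|}) (dpos : 0 < mindeg e) : injectiveb f -> #|V| + mindeg e <= strf e f.
Proof.
move=> /injectiveP finj.
case hp: #|V| => [|p].
  by have := mindeg_leV; rewrite hp; lia.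
have ontoP := inj_card_onto finj.
have [x fx] : exists x, val (f x) = p.
  have pl : p < #|V| by rewrite hp.
  have := ontoP (eq_leq (card_ord _)) (Ordinal pl).
  by move=> /codomP [x hx]; exists x; rewrite -hx.
have hd := mindeg_le x.
have : exists2 y, e x y & mindeg e <= (f y).+1.
  apply/exists_inP; apply: contraT => /exists_inPn H.
  have : #|f @: [set y | e x y]| <= (mindeg e).-1.
    apply: card_small_ord => i /imsetP [y]; rewrite inE => exy ->.
    by have := H y exy; rewrite -ltnNge; case: (mindeg e) dpos.
  rewrite card_imset //; move: hd; rewrite /deg; case: (mindeg e) dpos => // n _ ; lia.
case=> y exy hy.
rewrite /strf; apply: leq_trans _ (leq_bigmax_cond x (erefl true)).
apply: leq_trans _ (leq_bigmax_cond y exy).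
rewrite fx; lia.
Qed.

Lemma str_lb (dpos : 0 < mindeg e) : #|V| + mindeg e <= str e.
Proof.
rewrite /str; elim/big_ind: _.
- by have := mindeg_leV; lia.
- by move=> a b ha hb; rewrite leq_min ha.
- by move=> f /(strf_lb dpos).
Qed.
End Lower.

Section DSeq.
Variable V : finType.
Variable e : rel V.
Hypothesis e_sym : symmetric e.
Hypothesis e_irr : irreflexive e.
Variable s : nat.
Variable S : nat -> {set V}.
Variable u : nat -> V.
Hypothesis hd : is_dseq e s S u.

Lemma hs2 : 2 <= s. Proof. by case: hd. Qed.
Lemma hS1 : S 1 = setT. Proof. by case: hd. Qed.
Lemma hstep i : 1 <= i < s ->
  [/\ ~~ terminal e (S i), u i \in core e (S i) &
      S i.+1 = core e (S i) :\: (u i |: nbr e (core e (S i)) (u i))].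
Proof. by case: hd => _ _ H _; apply: H. Qed.

Lemma core_sub (A : {set V}) : core e A \subset A.
Proof. by apply/subsetP => x; rewrite inE => /andP []. Qed.

Lemma S_sub_core i : 1 <= i < s -> S i.+1 \subset core e (S i).
Proof. by move=> /hstep [_ _ ->]; apply: subsetDl. Qed.

Lemma S_decr i j : 1 <= i -> i <= j -> j <= s -> S j \subset S i.
Proof.
move=> h1; elim: j => [|j IH] hij hjs; first by move: hij h1; rewrite leqn0 => /eqP ->.
case: (ltngtP i j.+1) hij => // [hlt _|-> _]; last by apply: subxx.
have h2 : i <= j by lia. have h3 : j <= s by lia. have h4 : 1 <= j < s by lia.
apply: subset_trans (IH h2 h3).
exact: subset_trans (S_sub_core h4) (core_sub _).
Qed.

Definition stg (x : V) : nat := \max_(i < s.+1 | (0 < i) && (x \in S i)) i.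

Lemma stg_max x j : 1 <= j <= s -> x \in S j -> j <= stg x.
Proof.
move=> hj hx; have hj' : j < s.+1 by lia.
by have := @leq_bigmax_cond _ (fun i : 'I_s.+1 => (0 < i) && (x \in S i)) (fun i => nat_of_ord i) (Ordinal hj') ; apply; rewrite /= hx; lia.
Qed.

Lemma stg_in x : [/\ 1 <= stg x, stg x <= s & x \in S (stg x)].
Proof.
have h1 : (0 < 1) && (x \in S 1) by rewrite hS1 inE.
have hs : 1 < s.+1 by have := hs2; lia.
pose A := [pred i : 'I_s.+1 | (0 < i) && (x \in S i)].
have hA : 0 < #|A|.
  by apply/card_gt0P; exists (Ordinal hs).
have E : stg x = \max_(i in A) i by apply: eq_bigl => i; rewrite inE.
have [i0 hi0 E2] := @eq_bigmax_cond _ A (fun i => nat_of_ord i) hA.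
rewrite E E2.
move: hi0; rewrite inE => /andP [h0 ->]; split => //; have := ltn_ord i0; lia.
Qed.

Lemma stg_ge1 x : 1 <= stg x. Proof. by case: (stg_in x). Qed.
Lemma stg_les x : stg x <= s. Proof. by case: (stg_in x). Qed.
Lemma stg_S x : x \in S (stg x). Proof. by case: (stg_in x). Qed.

Lemma mem_S x i : 1 <= i <= stg x -> x \in S i.
Proof.
move=> hi; have := S_decr (i:=i) (j:=stg x); rewrite (stg_les x) => /(_ _ _ erefl) /subsetP.
by apply; [lia|lia|apply: stg_S].
Qed.

Lemma notin_S x i : stg x < i <= s -> x \notin S i.
Proof. by move=> hi; apply/negP => /(stg_max _) H; have := H ltac:(lia); lia. Qed.

Definition uu (i : nat) : V :=
  if i < s then u i else odflt (u i) [pick y in core e (S i)].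

Definition iso x := x \notin core e (S (stg x)).
Definition isu x := x == uu (stg x).
Definition small x := ~~ iso x && ~~ isu x.

Definition key (o b : nat) (x : V) : nat :=
  if iso x then b + 2 * (s - stg x) + 1
  else if isu x then b + 2 * (s - stg x) else o + stg x.

Lemma uu_prop i : 1 <= i <= s -> core e (S i) != set0 ->
  stg (uu i) = i /\ uu i \in core e (S i).
Proof.
move=> hi hne; rewrite /uu; case: ltnP => his.
  have [_ hc hS] := hstep (i:=i) ltac:(lia).
  split => //; have := stg_max (x := u i) hi (subsetP (core_sub _) _ hc).
  case: (ltngtP i (stg (u i))) => // hlt _.
  have := mem_S (x := u i) (i := i.+1) ltac:(have := stg_les (u i); lia).
  by rewrite hS !inE eqxx.
case: pickP => [y hy|h]; last first.
  by move: hne; case/set0Pn => y; rewrite h.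
have ei : i = s by lia.
split => //; have := stg_max (x := y) hi (subsetP (core_sub _) _ hy).
by rewrite /=; have := stg_les y; lia.
Qed.

Lemma key_uu o b i : 1 <= i <= s -> core e (S i) != set0 ->
  key o b (uu i) = b + 2 * (s - i).
Proof.
move=> hi hne; have [hs hc] := uu_prop hi hne.
by rewrite /key /iso /isu hs hc eqxx.
Qed.

Lemma key_small o b x : small x -> key o b x = o + stg x.
Proof. by rewrite /key /small => /andP [/negbTE -> /negbTE ->]. Qed.

Lemma key_nsmall o b x : ~~ small x -> b + 2 * (s - stg x) <= key o b x.
Proof. by rewrite /key /small negb_and !negbK; case: (iso x) => //=; [lia|move=> ->]. Qed.

Lemma key_nsmall2 o b x : ~~ small x -> b + 2 * (s - stg x) + (iso x) = key o b x.
Proof. by rewrite /key /small negb_and !negbK; case: (iso x) => //= ->; lia. Qed.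

Lemma card_core (A : {set V}) : #|A| = mcount e A + #|core e A|.
Proof.
rewrite /mcount -(cardsID (core e A) A) (setIidPr (core_sub A)); lia.
Qed.

Lemma core_step i : 1 <= i < s ->
  1 + dval e s S u i + #|S i.+1| <= #|core e (S i)|.
Proof.
move=> hi; have [_ hc hS] := hstep hi.
rewrite /dval (_ : i < s = true); last by lia.
set c := core e (S i); set N := nbr e c (u i).
have sub : u i |: N \subset c.
  apply/subsetP => x; rewrite in_setU1 => /orP [/eqP ->|]; first exact: hc.
  by rewrite /N /nbr inE => /andP [].
rewrite -(cardsID (u i |: N) c) (setIidPr sub) hS cardsU1.
have -> : u i \notin N by rewrite !inE e_irr andbF.
by [].
Qed.

Lemma Ssize i : 1 <= i <= s ->
  \sum_(1 <= k < i) (mval e S k + 1 + dval e s S u k) + mval e S i + #|core e (S i)| <= #|S 1|.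
Proof.
elim: i => [|i IH] hi; first by lia.
case: (posnP i) => [->|ipos].
  by rewrite big_geq // /mval -card_core.
have := IH ltac:(lia); rewrite big_nat_recr /=; last by lia.
have := core_step (i := i) ltac:(lia).
rewrite (card_core (S i.+1)) /mval; lia.
Qed.

Definition smallset k := [set x | small x && (stg x == k)].

Lemma card_smallset k : #|smallset k| <= dval e s S u k.
Proof.
case: (boolP (1 <= k <= s)) => hk; last first.
  rewrite (_ : smallset k = set0) ?cards0 //; apply/setP => x; rewrite !inE.
  apply/negP => /andP [_ /eqP ek]; move: hk; rewrite -ek stg_ge1 stg_les.
  by [].
rewrite /dval; case: ltnP => hks.
  apply: subset_leq_card; apply/subsetP => x; rewrite [x \in smallset k]inE => /andP [hs /eqP ek].
  move: hs; rewrite /small /iso /isu ek /uu hks negbK => /andP [hc hu].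
  have hx := notin_S (x := x) (i := k.+1) ltac:(lia).
  have [_ _ hS] := hstep (i := k) ltac:(lia).
  move: hx; rewrite hS in_setD in_setU1 hc (negbTE hu) /= andbT.
  by rewrite negbK.
have ek : k = s by lia.
have sub : smallset k \subset core e (S k) :\ uu k.
  apply/subsetP => x; rewrite [x \in smallset k]inE in_setD1 => /andP [hs /eqP ex].
  by move: hs; rewrite /small /iso /isu ex negbK => /andP [-> ->]; rewrite andbT.
apply: leq_trans (subset_leq_card sub) _.
case: eqP => [->|/eqP hne]; first by rewrite set0D cards0.
have [_ hc] := uu_prop (i := k) ltac:(lia) hne.
by rewrite (cardsD1 (uu k) (core e (S k))) hc.
Qed.

Definition DS i := \sum_(1 <= k < i.+1) dval e s S u k.

Lemma card_smallle i : #|[set x | small x && (stg x <= i)]| <= DS i.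
Proof.
elim: i => [|i IH].
  rewrite (_ : [set x | _] = set0) ?cards0 //; apply/setP => x; rewrite !inE.
  by have := stg_ge1 x; rewrite leqn0; case: eqP => [->|]; rewrite ?andbF.
rewrite /DS big_nat_recr //=.
apply: (@leq_trans (#|[set x | small x && (stg x <= i)]| + #|smallset i.+1|)); last first.
  by apply: leq_add => //; apply: card_smallset.
apply: leq_trans (leq_card_setU _ _); apply: subset_leq_card; apply/subsetP => x.
rewrite !inE leq_eqVlt ltnS => /andP [-> /orP [->|->]] //; by rewrite orbT.
Qed.

Lemma core_mem z i : 1 <= i <= stg z -> (~~ iso z || (i < stg z)) -> z \in core e (S i).
Proof.
move=> hi h2; have hz := stg_les z.
case: (ltnP i (stg z)) => hlt.
  have h3 := S_sub_core (i := i) ltac:(lia).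
  have h4 := mem_S (x := z) (i := i.+1) ltac:(lia).
  by move/subsetP: h3; apply.
have ei : stg z = i by lia.
by move: h2; rewrite /iso ei ltnn orbF negbK.
Qed.

Definition Rel i z := (z = uu i) \/ (small z /\ stg z = i) \/ (i < stg z).

Lemma edge_case1 x y : e x y -> stg x <= stg y ->
  exists i, [/\ 1 <= i <= s, core e (S i) != set0 &
    (small x /\ stg x = i /\ Rel i y) \/ (small y /\ stg y = i /\ Rel i x)].
Proof.
move=> exy hle; set i := stg x.
have hi : 1 <= i <= s by rewrite stg_ge1 stg_les.
have xS : x \in S i := stg_S x.
have yS : y \in S i by apply: mem_S; rewrite stg_ge1.
have xc : x \in core e (S i) by rewrite inE xS; apply/set0Pn; exists y; rewrite inE yS exy.
have yc : y \in core e (S i) by rewrite inE yS; apply/set0Pn; exists x; rewrite inE xS e_sym exy.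
have hne : core e (S i) != set0 by apply/set0Pn; exists x.
exists i; split => //.
have ni : ~~ iso x by rewrite /iso negbK.
case: (eqVneq x (uu i)) => hx.
  have hyi : stg y = i.
    case: (ltngtP i (stg y)) hle => // hlt _.
    have yS1 : y \in S i.+1 by apply: mem_S; lia.
    have his : i < s by have := stg_les y; lia.
    have [_ _ hS] := hstep (i := i) ltac:(lia).
    have hu : uu i = u i by rewrite /uu his.
    have yn : y \in nbr e (core e (S i)) (u i) by rewrite inE yc -hu -hx exy.
    by move: yS1; rewrite hS in_setD in_setU1 yn orbT.
  right; split; last by split => //; left.
  rewrite /small /iso /isu hyi negbK yc /=; apply/eqP => ey.
  by move: exy; rewrite hx -ey e_irr.
left; split; first by rewrite /small ni /isu -/i hx.
split => //.
case: (ltngtP i (stg y)) hle => // [hlt _|hyi _]; first by right; right.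
case: (eqVneq y (uu i)) => hy; first by left.
by right; left; split => //; rewrite /small /iso /isu -hyi negbK yc hy.
Qed.

Lemma edge_case x y : e x y ->
  exists i, [/\ 1 <= i <= s, core e (S i) != set0 &
    (small x /\ stg x = i /\ Rel i y) \/ (small y /\ stg y = i /\ Rel i x)].
Proof.
move=> exy; case: (leqP (stg x) (stg y)) => h; first exact: edge_case1.
have [i [h1 h2 h3]] := edge_case1 (x := y) (y := x) ltac:(by rewrite e_sym) (ltnW h).
by exists i; split => //; case: h3; [right|left].
Qed.

Lemma key_Rel o b i z : o + s < b -> 1 <= i <= s -> core e (S i) != set0 -> Rel i z ->
  key o b z <= key o b (uu i).
Proof.
move=> hob hi hne; rewrite key_uu //.
case=> [->|[[hs hz]|hlt]]; first by rewrite key_uu.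
  by rewrite key_small // hz; lia.
have hz := stg_les z.
case: (boolP (small z)) => hs; first by rewrite key_small //; lia.
by rewrite -key_nsmall2 //; case: (iso z); lia.
Qed.

Lemma downset o b i : o + s < b -> i <= s ->
  [set z | key o b z <= o + i] \subset [set z | small z && (stg z <= i)].
Proof.
move=> hob hi; apply/subsetP => z; rewrite !inE.
case: (boolP (small z)) => hs /=; first by rewrite key_small //; lia.
move=> h; have := key_nsmall o b hs; have := stg_les z; lia.
Qed.

Lemma upset o b i : o + s < b -> 1 <= i <= s -> core e (S i) != set0 ->
  [set z | key o b z <= key o b (uu i)] \subset
  [set z | small z && (stg z <= i.-1)] :|: core e (S i).
Proof.
move=> hob hi hne; rewrite key_uu //; apply/subsetP => z; rewrite in_setU [z \in [set _ | _]]inE [z \in [set z | small z && _]]inE.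
have hz := stg_les z; have hz1 := stg_ge1 z.
case: (boolP (small z)) => hs /=.
  rewrite key_small // => _.
  case: (ltnP (stg z) i) => h; first by apply/orP; left; lia.
  apply/orP; right; apply: core_mem; first by lia.
  by move: hs; rewrite /small => /andP [-> _].
rewrite -key_nsmall2 // => h.
apply: core_mem.
  by move: h; case: (iso z) => /= h; lia.
by move: h; case: (iso z) => //= h; lia.
Qed.

Lemma key_lt_b o b z : key o b z < b -> small z /\ key o b z = o + stg z.
Proof.
case: (boolP (small z)) => hs; first by rewrite key_small.
by have := key_nsmall o b hs; lia.
Qed.

Lemma key_ge o b z : o + s < b -> o + 1 <= key o b z.
Proof.
move=> hob; case: (boolP (small z)) => hs; first by rewrite key_small //; have := stg_ge1 z; lia.
by have := key_nsmall o b hs; lia.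
Qed.

Lemma dval_core_s : dval e s S u s <= #|core e (S s)|.
Proof. by rewrite /dval ltnn; case: eqP => // _; apply: leq_pred. Qed.

Definition SM i := \sum_(1 <= k < i.+1) (mval e S k + 1).

Lemma sum_split i : 1 <= i ->
  \sum_(1 <= k < i) (mval e S k + 1 + dval e s S u k) = SM i.-1 + DS i.-1.
Proof. by case: i => // i _; rewrite /SM /DS -big_split. Qed.

Lemma SM_rec i : SM i.+1 = SM i + (mval e S i.+1 + 1).
Proof. by rewrite /SM big_nat_recr. Qed.
Lemma DS_rec i : DS i.+1 = DS i + dval e s S u i.+1.
Proof. by rewrite /DS big_nat_recr. Qed.

Local Open Scope ring_scope.
Lemma zval_eq i : (1 <= i)%N -> zval e s S u i =
  (SM i)%:Z - (DS i)%:Z - (mval e S 1 + 1)%:Z + (dval e s S u 1)%:Z.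
Proof.
elim: i => // i IH _; case: (posnP i) => [->|ipos].
  rewrite /zval big_geq // /SM /DS !big_nat1; lia.
rewrite /zval big_nat_recr /=; last by lia.
rewrite -/(zval e s S u i) IH // SM_rec DS_rec /yval; lia.
Qed.
Local Close Scope ring_scope.

End DSeq.

Lemma bigmin_int_le (F : nat -> int) x0 n j : (2 <= j <= n)%N ->
  (\big[Num.min/x0]_(2 <= i < n.+1) F i <= F j)%R.
Proof.
move=> hj; have : j \in index_iota 2 n.+1 by rewrite mem_index_iota; lia.
elim: (index_iota 2 n.+1) => // a r IH; rewrite big_cons inE => /orP [/eqP <-|/IH h].
  by rewrite ge_min lexx.
by rewrite ge_min h orbT.
Qed.

Lemma zmin_le (V : finType) (e : rel V) s S u j : (2 <= j <= s)%N ->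
  (zmin e s S u <= zval e s S u j)%R.
Proof. exact: bigmin_int_le. Qed.

Lemma card_sum_le (V1 V2 : finType) (A : {set V1 + V2}) :
  #|A| <= #|[set a | inl a \in A]| + #|[set b | inr b \in A]|.
Proof.
apply: (@leq_trans #|inl @: [set a | inl a \in A] :|: inr @: [set b | inr b \in A]|).
  apply: subset_leq_card; apply/subsetP => -[a|b] h; rewrite in_setU.
    by apply/orP; left; apply/imsetP; exists a; rewrite ?inE.
  by apply/orP; right; apply/imsetP; exists b; rewrite ?inE.
apply: leq_trans (leq_card_setU _ _) _.
by rewrite !card_imset //; move=> x y [].
Qed.

Lemma bigmin_le_term (T : finType) (P : pred T) (F : T -> nat) idx x :
  P x -> \big[minn/idx]_(i | P i) F i <= F x.
Proof.
move=> Px; have : x \in index_enum T by rewrite mem_index_enum.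
elim: (index_enum T) => // a r IH; rewrite big_cons inE => /orP [/eqP <-|/IH h].
  by rewrite Px geq_minl.
by case: (P a) => //; rewrite geq_min h orbT.
Qed.

Lemma mindeg_pos (V : finType) (e : rel V) : 0 < #|V| -> (forall x, exists y, e x y) -> 0 < mindeg e.
Proof.
move=> hV hx; rewrite /mindeg; elim/big_ind: _ => //.
  by move=> a b ha hb; rewrite leq_min ha.
move=> x _; have [y hy] := hx x; rewrite /deg; apply/card_gt0P; exists y; by rewrite inE.
Qed.

Lemma has_nbr (V : finType) (e : rel V) x : 0 < mindeg e -> exists y, e x y.
Proof.
move=> h; have := leq_trans h (mindeg_le e x); rewrite /deg => /card_gt0P [y].
by rewrite inE; exists y.
Qed.
Unset Implicit Arguments. Set Strict Implicit.

Theorem mainTheorem7 (VH VT : finType) (eH : rel VH) (eT : rel VT)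
  (eH_sym : symmetric eH) (eH_irr : irreflexive eH)
  (eT_sym : symmetric eT) (eT_irr : irreflexive eT)
  (degH : 1 <= mindeg eH <= #|VH| - 2)
  (degT : 1 <= mindeg eT <= #|VT| - 2)
  (s : nat) (SH : nat -> {set VH}) (uH : nat -> VH)
  (dsH : is_dseq eH s SH uH)
  (hZ : (zmin eH s SH uH <= 0)%R)
  (t : nat) (ST : nat -> {set VT}) (uT : nat -> VT)
  (dsT : is_dseq eT t ST uT)
  (hzT : forall i, 2 <= i <= t -> (0 <= zval eT t ST uT i)%R)
  (hcond : ((dval eH s SH uH 1)%:Z - zmin eH s SH uH <= zval eT t ST uT t)%R) :
  #|{: VH + VT}| + mindeg (sumrel eH eT) <= str (sumrel eH eT)
  <= #|{: VH + VT}| + dval eT t ST uT 1.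
Proof.
have hs := hs2 dsH; have ht := hs2 dsT.
apply/andP; split.
  apply: str_lb; apply: mindeg_pos.
    by rewrite card_sum; lia.
  case=> [a|b].
    by have [b hb] := has_nbr a (ltac:(lia) : 0 < mindeg eH); exists (inl b).
  by have [c hc] := has_nbr b (ltac:(lia) : 0 < mindeg eT); exists (inr c).
pose HB := t + s + 1; pose BT := HB + 2 * s + 2.
pose keyH := key eH s SH uH t HB; pose keyT := key eT t ST uT 0 BT.
pose W := fun z : VH + VT => match z with inl a => keyH a | inr b => keyT b end.
pose c := fun z => #|[set z' | W z' <= W z]|.
have cmono : forall z1 z2, W z1 <= W z2 -> c z1 <= c z2.
  move=> z1 z2 h; apply: subset_leq_card; apply/subsetP => z; rewrite !inE => h2.
  exact: leq_trans h2 h.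
have csplit : forall z, c z <= #|[set a | keyH a <= W z]| + #|[set b | keyT b <= W z]|.
  move=> z; apply: leq_trans (card_sum_le _) _.
  rewrite (_ : [set a | inl a \in _] = [set a | keyH a <= W z]); last by apply/setP => a; rewrite !inE.
  rewrite (_ : [set b | inr b \in _] = [set b | keyT b <= W z]) //; by apply/setP => a; rewrite !inE.
have hHB : t + s < HB by rewrite /HB; lia.
have hBT : 0 + t < BT by rewrite /BT /HB; lia.
have VTsz : #|VT| = #|ST 1| by rewrite (hS1 dsT) cardsT.
have VHsz : #|VH| = #|SH 1| by rewrite (hS1 dsH) cardsT.
have Tb : forall a b i, 1 <= i <= t -> core eT (ST i) != set0 ->
    small eT t ST uT a -> stg t ST a = i -> Rel eT t ST uT i b ->
    c (inr a) + c (inr b) <= #|VH| + #|VT| + dval eT t ST uT 1.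
  move=> a b i hi hne sa sta Rb.
  have c1 : c (inr a) <= DS eT t ST uT i.
    apply: leq_trans (csplit _) _.
    have -> : [set a0 | keyH a0 <= W (inr a)] = set0.
      apply/setP => a0; rewrite !inE /= /keyT key_small // sta.
      have := key_ge dsH a0 hHB; rewrite -/keyH; lia.
    rewrite cards0 add0n /= /keyT key_small // sta.
    apply: leq_trans (card_smallle dsT i).
    by apply: subset_leq_card; apply: (downset dsT) => //; lia.
  have c2 : c (inr b) <= #|VH| + (DS eT t ST uT i.-1 + #|core eT (ST i)|).
    apply: leq_trans (cmono _ (inr (uu eT t ST uT i)) _) _.
      by rewrite /= /keyT; apply: (key_Rel dsT).
    apply: leq_trans (csplit _) _; apply: leq_add; first by apply: max_card.
    apply: leq_trans (subset_leq_card (upset dsT hBT hi hne)) _.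
    apply: leq_trans (leq_card_setU _ _) _; apply: leq_add => //.
    exact: card_smallle dsT _.
  have c3 := Ssize eT_irr dsT hi; rewrite sum_split in c3; last by lia.
  rewrite -VTsz in c3.
  case: i hi hne sta Rb c1 c2 c3 => [|i] hi hne sta Rb c1 c2 c3; first by lia.
  rewrite DS_rec /= in c1.
  case: (posnP i) => [i0|ipos].
    subst i; rewrite /DS big_geq // in c1 c2 c3.
    rewrite /SM big_geq // in c3; lia.
  have hz := hzT i.+1 ltac:(lia).
  rewrite zval_eq // SM_rec DS_rec in hz.
  have hd1 : DS eT t ST uT 1 = dval eT t ST uT 1 by rewrite /DS big_nat1.
  have hm1 : SM eT ST 1 = mval eT ST 1 + 1 by rewrite /SM big_nat1.
  have : DS eT t ST uT i + dval eT t ST uT i.+1 + mval eT ST 1 + 1 <=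
         SM eT ST i + (mval eT ST i.+1 + 1) + dval eT t ST uT 1 by lia.
  move: c2 c3; rewrite -!pred_Sn => c2 c3; lia.
have Tset : forall k, k < BT -> #|[set b | keyT b <= k]| <= DS eT t ST uT t.
  move=> k hk; apply: leq_trans (card_smallle dsT t).
  apply: subset_leq_card; apply: subset_trans (downset dsT hBT (leqnn t)).
  apply/subsetP => b; rewrite !inE => hb.
  have [_ ->] := key_lt_b (leq_ltn_trans hb hk); have := stg_les dsT b; lia.
have Hb : forall a b j, 1 <= j <= s -> core eH (SH j) != set0 ->
    small eH s SH uH a -> stg s SH a = j -> Rel eH s SH uH j b ->
    c (inl a) + c (inl b) <= #|VH| + #|VT| + dval eT t ST uT 1.
  move=> a b j hj hne sa sta Rb.
  have c1 : c (inl a) <= DS eH s SH uH j + DS eT t ST uT t.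
    apply: leq_trans (csplit _) _; rewrite /= /keyH key_small // sta.
    apply: leq_add; last by apply: Tset; rewrite /BT /HB; lia.
    apply: leq_trans (card_smallle dsH j).
    by apply: subset_leq_card; apply: (downset dsH) => //; lia.
  have c2 : c (inl b) <= (DS eH s SH uH j.-1 + #|core eH (SH j)|) + DS eT t ST uT t.
    apply: leq_trans (cmono _ (inl (uu eH s SH uH j)) _) _.
      by rewrite /= /keyH; apply: (key_Rel dsH).
    apply: leq_trans (csplit _) _; apply: leq_add; last first.
      by apply: Tset; rewrite /= /keyH key_uu // /BT /HB; lia.
    apply: leq_trans (subset_leq_card (upset dsH hHB hj hne)) _.
    apply: leq_trans (leq_card_setU _ _) _; apply: leq_add => //.
    exact: card_smallle dsH _.
  have c3 := Ssize eH_irr dsH hj; rewrite sum_split in c3; last by lia.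
  rewrite -VHsz in c3.
  have c4 := Ssize eT_irr dsT (i := t) ltac:(lia); rewrite sum_split in c4; last by lia.
  rewrite -VTsz in c4.
  have c5 := dval_core_s eT t ST uT.
  have hzT2 := zval_eq eT t ST uT (i := t) ltac:(lia).
  have hZj : (zmin eH s SH uH <= zval eH s SH uH j)%R.
    case: (ltnP 1 j) => hj2; first by apply: zmin_le; lia.
    have -> : j = 1 by lia.
    by rewrite /zval big_geq.
  have hzH := zval_eq eH s SH uH (i := j) ltac:(lia).
  have [t' et] : exists t', t = t'.+1 by exists t.-1; lia.
  move: c1 c2 c4 c5 hzT2 hcond; rewrite et => c1 c2 c4 c5 hzT2 hcond.
  rewrite SM_rec DS_rec /= in hzT2 c1 c2 c4 c5 *.
  case: j hj hne sta Rb c1 c2 c3 hZj hzH => [|j'] // hj hne sta Rb c1 c2 c3 hZj hzH.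
  rewrite SM_rec DS_rec /= in hzH c1.
  rewrite /= in c2 c3 c4.
  have hd1 : DS eH s SH uH 1 = dval eH s SH uH 1 by rewrite /DS big_nat1.
  have hm1 : SM eH SH 1 = mval eH SH 1 + 1 by rewrite /SM big_nat1.
  have hd1' : DS eT t'.+1 ST uT 1 = dval eT t'.+1 ST uT 1 by rewrite /DS big_nat1.
  have hm1' : SM eT ST 1 = mval eT ST 1 + 1 by rewrite /SM big_nat1.
  lia.
rewrite /str. have h0 := (@bigmin_le_term _ (fun f : {ffun (VH + VT)%type -> 'I_#|{: VH + VT}|} => injectiveb f) (strf (sumrel eH eT)) (#|{: VH + VT}| + #|{: VH + VT}|) (ff W) (ff_inj W)). apply: leq_trans h0 _.
rewrite /strf; apply/bigmax_leqP => x _; apply/bigmax_leqP => y exy.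
apply: leq_trans (leq_add (ff_le W x) (ff_le W y)) _.
rewrite -/(c x) -/(c y) card_sum.
case: x y exy => [a|a] [b|b] //= exy.
  have [i [hi hne [[sa [sta Rb]]|[sb [stb Ra]]]]] := edge_case eH_sym eH_irr dsH exy.
    exact: Hb sa sta Rb.
  by rewrite addnC; apply: Hb sb stb Ra.
have [i [hi hne [[sa [sta Rb]]|[sb [stb Ra]]]]] := edge_case eT_sym eT_irr dsT exy.
  exact: Tb sa sta Rb.
by rewrite addnC; apply: Tb sb stb Ra.
Qed.
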